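(* Let $q$ be a prime power, $n\ge k\ge d\ge0$ integers, and $V_1,\dots,V_\ell$ subspaces of $\mathbb{F}_q^n$, each of dimension at most $k$. The following are equivalent: (1) there is a generic kernel pattern $(T_1,\dots,T_k)$ consisting solely of copies of $V_1,\dots,V_\ell$ and an additional $d$ copies of $\{0\}$; (2) there exist integers $\delta_1,\dots,\delta_\ell\ge0$ with $\sum_{i=1}^\ell\delta_i=k-d$ such that $\dim\big(\bigcap_{i\in\Omega}V_i\big)\le k-\sum_{i\in\Omega}\delta_i$ for every nonempty $\Omega\subseteq[\ell]$; (3) for every partition $P_1\sqcup\cdots\sqcup P_s=[\ell]$ into nonempty parts, $\sum_{i=1}^s\dim\big(\bigcap_{j\in P_i}V_j\big)\le(s-1)k+d$.
   Context: A generic kernel pattern is a $k$-tuple $(T_1,\dots,T_k)$ of subspaces of $\mathbb{F}_q^n$ with $\dim(\bigcap_{i\in\Omega}T_i)\le k-|\Omega|$ for all nonempty $\Omega\subseteq[k]$. *)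

(* Defs.v *)
From HB Require Import structures.
From mathcomp Require Import all_boot all_order all_algebra all_field.
Set Implicit Arguments. Unset Strict Implicit. Unset Printing Implicit Defensive.
Import GRing.Theory.
Local Open Scope ring_scope.

Definition generic_kernel_pattern (F : fieldType) (n k : nat)
    (T : 'I_k -> {vspace 'rV[F]_n}) : Prop :=
  forall Om : {set 'I_k}, Om != set0 ->
    (\dim (\bigcap_(i in Om) T i)%VS <= k - #|Om|)%N.

Definition pattern_of (F : fieldType) (n k l : nat)
    (V : 'I_l -> {vspace 'rV[F]_n}) (sigma : 'I_k -> option 'I_l)
    : 'I_k -> {vspace 'rV[F]_n} :=
  fun j => match sigma j with Some i => V i | None => 0%VS end.

(* Main.v *)
Require Import Defs.
From HB Require Import structures.
From mathcomp Require Import all_boot all_order all_algebra all_field.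
From mathcomp Require Import zify.
Set Implicit Arguments. Unset Strict Implicit. Unset Printing Implicit Defensive.

Section Sums.
Variable I : finType.

Lemma sum_subset (A B : {set I}) (f : I -> nat) :
  A \subset B -> (\sum_(i in A) f i <= \sum_(i in B) f i)%N.
Proof.
move=> sAB; rewrite (big_setID (A:=B) A) /=.
have -> : B :&: A = A by apply/setIidPr.
exact: leq_addr.
Qed.

Lemma sum_setUI (A B : {set I}) (f : I -> nat) :
  (\sum_(i in A :|: B) f i + \sum_(i in A :&: B) f i =
   \sum_(i in A) f i + \sum_(i in B) f i)%N.
Proof.
rewrite (big_setID (A:=A :|: B) A) /= (big_setID (A:=B) A) /=.
have -> : (A :|: B) :&: A = A by apply/setP=> x; rewrite !inE; case: (x \in A); case: (x \in B).
have -> : (A :|: B) :\: A = B :\: A by apply/setP=> x; rewrite !inE; case: (x \in A); case: (x \in B).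
have -> : B :&: A = A :&: B by rewrite setIC.
lia.
Qed.

Lemma sum_indicator (i : I) : (\sum_(x : I) (x == i : nat) = 1)%N.
Proof.
rewrite (bigD1 i) //= eqxx big1 // => x /negbTE -> //.
Qed.

End Sums.

Section Augment.
Variable l : nat.
Variable g : {set 'I_l} -> nat.
Variable k : nat.
Hypothesis gsup : forall A B : {set 'I_l}, A :&: B != set0 ->
  (g A + g B <= g (A :|: B) + g (A :&: B))%N.
Hypothesis gk : forall A : {set 'I_l}, A != set0 -> (g A <= k)%N.

Definition feas (delta : 'I_l -> nat) :=
  [forall A : {set 'I_l}, (A != set0) ==> (g A + \sum_(x in A) delta x <= k)%N].

Lemma feasP delta : reflect (forall A, A != set0 -> (g A + \sum_(x in A) delta x <= k)%N)
  (feas delta).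
Proof.
apply: (iffP forallP) => [H A nA|H A]; first by have := H A; rewrite nA.
by apply/implyP => /H.
Qed.

Section Tight.
Variable delta : 'I_l -> nat.
Hypothesis fd : feas delta.

Definition tight (A : {set 'I_l}) := (A != set0) && (g A + \sum_(x in A) delta x == k).

Lemma tightU A B : tight A -> tight B -> A :&: B != set0 -> tight (A :|: B).
Proof.
move=> /andP[nA /eqP tA] /andP[nB /eqP tB] nAB.
have nU : A :|: B != set0.
  by rewrite setU_eq0 negb_and nA.
apply/andP; split => //.
have := gsup nAB; have := sum_setUI A B delta.
have := (feasP _ fd) _ nU; have := (feasP _ fd) _ nAB.
move=> h1 h2 h3 h4; apply/eqP; lia.
Qed.

Definition Mx (i : 'I_l) := \bigcup_(A | tight A && (i \in A)) A.

Lemma Mx_tight i B : tight B -> i \in B -> tight (Mx i) /\ i \in Mx i /\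
  forall C, tight C -> i \in C -> C \subset Mx i.
Proof.
move=> tB iB.
have sub : forall C, tight C -> i \in C -> C \subset Mx i.
  by move=> C tC iC; apply: (bigcup_sup C); rewrite tC iC.
have iM : i \in Mx i by apply: (subsetP (sub B tB iB)).
suff tM : tight (Mx i) by [].
have : Mx i == set0 \/ (tight (Mx i) /\ i \in Mx i).
  rewrite /Mx; apply: (big_ind (fun X => X == set0 \/ (tight X /\ i \in X))).
  - by left.
  - move=> X Y [/eqP -> | [tX iX]] [/eqP -> | [tY iY]].
    + by left; rewrite setU0.
    + by right; rewrite set0U.
    + by right; rewrite setU0.
    + right; split; last by rewrite inE iX.
      apply: tightU => //; apply/set0Pn; exists i; by rewrite inE iX iY.
  - by move=> A /andP[tA iA]; right.
case=> [/eqP e | [] //]; by rewrite e inE in iM.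
Qed.

End Tight.

Variable d : nat.
Hypothesis hpart : forall P : {set {set 'I_l}}, partition P [set: 'I_l] ->
  (\sum_(B in P) g B + k <= #|P| * k + d)%N.

Lemma step delta : feas delta -> (\sum_i delta i < k - d)%N ->
  exists delta', feas delta' /\ \sum_i delta' i = (\sum_i delta i).+1.
Proof.
move=> fd lt.
case: (boolP [exists i, feas (fun x => delta x + (x == i))]) => [/existsP[i fi]|].
  exists (fun x => delta x + (x == i)); split => //.
  by rewrite big_split /= sum_indicator addn1.
rewrite negb_exists => /forallP nf.
have T : forall i, exists B, tight delta B /\ i \in B.
  move=> i; have := nf i; rewrite /feas negb_forall => /existsP[B].
  rewrite negb_imply => /andP[nB bad].
  have fB := (feasP _ fd) _ nB.
  rewrite big_split /= in bad.
  case iB : (i \in B); last first.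
    have z : (\sum_(x in B) nat_of_bool (x == i) = 0)%N.
      by apply: big1 => x xB; apply/eqP; rewrite eqb0; apply: contraNneq (negbT iB) => <-.
    by move: bad; rewrite z addn0 fB.
  exists B; split => //; apply/andP; split => //.
  have z : (\sum_(x in B) nat_of_bool (x == i) = 1)%N.
    rewrite (bigD1 i) //= eqxx big1 // => x /andP[_ /negbTE ->] //.
  move: bad fB; rewrite z => bad fB; apply/eqP; set s := (\sum_(x in B) delta x)%N in bad fB *; lia.
pose P := [set Mx delta i | i in [set: 'I_l]].
have MP : forall i, [/\ tight delta (Mx delta i), i \in Mx delta i &
  forall C, tight delta C -> i \in C -> C \subset Mx delta i].
  move=> i; have [B [tB iB]] := T i; have [a [b c]] := Mx_tight fd tB iB; by split.
have partP : partition P [set: 'I_l].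
  apply/and3P; split.
  - apply/eqP/setP => x; rewrite inE; apply/bigcupP; exists (Mx delta x).
      by apply/imsetP; exists x.
    by have [] := MP x.
  - apply/trivIsetP => A B /imsetP[i _ ->] /imsetP[j _ ->] neq.
    rewrite -setI_eq0; apply: contraR neq => nI.
    have [ti ii si] := MP i; have [tj ij sj] := MP j.
    have tU := tightU fd ti tj nI.
    have s1 := si _ tU; have s2 := sj _ tU.
    rewrite eqEsubset; apply/andP; split.
      by apply: subset_trans (subsetUl _ _) (s2 _); rewrite inE ij orbT.
    by apply: subset_trans (subsetUr _ _) (s1 _); rewrite inE ii.
  - apply/imsetP => -[i _ e]; have [_ ii _] := MP i.
    by rewrite -e inE in ii.
have HP := hpart partP.
have tsum : (\sum_(B in P) (g B + \sum_(x in B) delta x) = #|P| * k)%N.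
  rewrite -sum_nat_const; apply: eq_bigr => B /imsetP[i _ ->].
  by have [/andP[_ /eqP ->] _ _] := MP i.
rewrite big_split /= in tsum.
have cov : (\sum_(B in P) \sum_(x in B) delta x = \sum_i delta i)%N.
  have [/eqP cP tP _] := and3P partP.
  rewrite -(big_trivIset _ tP) cP; apply: eq_bigl => x; by rewrite inE.
move: HP tsum cov lt.
set G := (\sum_(B in P) g B)%N; set S := (\sum_(B in P) \sum_(x in B) delta x)%N.
set t := (\sum_i delta i)%N.
move=> h1 h2 h3 h4; exfalso; move: h1 h2; set X := (#|P| * k)%N; move=> h1 h2; lia.
Qed.

Lemma augment : (forall A, A != set0 -> g A <= k)%N ->
  exists delta, feas delta /\ \sum_i delta i = (k - d)%N.
Proof.
move=> _.
suff : forall t, (t <= k - d)%N -> exists delta, feas delta /\ \sum_i delta i = t.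
  by apply.
elim => [_|t IH lt].
  exists (fun _ => 0%N); split; last by rewrite big1.
  by apply/feasP => A nA; rewrite big1 // addn0 gk.
have [delta [fd sd]] := IH (ltnW lt).
have lt' : (\sum_i delta i < k - d)%N by rewrite sd.
have [delta' [fd' sd']] := step fd lt'.
by exists delta'; rewrite sd' sd.
Qed.

End Augment.

Section VS.
Variables (F : fieldType) (n l : nat) (V : 'I_l -> {vspace 'rV[F]_n}).

Definition gV (A : {set 'I_l}) := \dim (\bigcap_(i in A) V i)%VS.

Lemma gV_sup (A B : {set 'I_l}) : A :&: B != set0 -> (gV A + gV B <= gV (A :|: B) + gV (A :&: B))%N.
Proof.
move=> _.
set X := (\bigcap_(i in A) V i)%VS; set Y := (\bigcap_(i in B) V i)%VS.
have h1 : (X :&: Y <= \bigcap_(i in (A :|: B)%SET) V i)%VS.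
  apply/subv_bigcapP => i; rewrite inE => /orP[iA|iB].
  - apply: subv_trans (capvSl X Y) _; exact: (bigcapv_inf i iA (subvv _)).
  - apply: subv_trans (capvSr X Y) _; exact: (bigcapv_inf i iB (subvv _)).
have h2 : (X + Y <= \bigcap_(i in (A :&: B)%SET) V i)%VS.
  apply/subv_bigcapP => i; rewrite inE => /andP[iA iB].
  rewrite subv_add; apply/andP; split.
  - exact: (bigcapv_inf i iA (subvv _)).
  - exact: (bigcapv_inf i iB (subvv _)).
have := dimv_sum_cap X Y; have := dimvS h1; have := dimvS h2.
rewrite /gV -/X -/Y; lia.
Qed.

Lemma gV_le (A : {set 'I_l}) (i : 'I_l) : i \in A -> (gV A <= \dim (V i))%N.
Proof. by move=> iA; apply: dimvS; exact: (bigcapv_inf i iA (subvv _)). Qed.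

Lemma gV_mono (A B : {set 'I_l}) : A \subset B -> (gV B <= gV A)%N.
Proof.
move=> sAB; apply: dimvS; apply/subv_bigcapP => i iA.
exact: (bigcapv_inf i (subsetP sAB _ iA) (subvv _)).
Qed.

Lemma gV_k k : (forall i, \dim (V i) <= k)%N -> forall A, A != set0 -> (gV A <= k)%N.
Proof. by move=> hV A /set0Pn[i iA]; apply: leq_trans (gV_le iA) (hV i). Qed.

End VS.

Section Sigma.
Variables (k l : nat) (sigma : 'I_k -> option 'I_l).

Definition cnt (Om : {set 'I_k}) (i : 'I_l) := \sum_(j in Om) nat_of_bool (sigma j == Some i).

Lemma card_cond (Om : {set 'I_k}) (P : pred 'I_k) :
  #|[set j in Om | P j]| = \sum_(j in Om) nat_of_bool (P j).
Proof.
rewrite -sum1_card big_mkcond [RHS]big_mkcond /=; apply: eq_bigr => j _.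
by rewrite !inE; case: (j \in Om); case: (P j).
Qed.

Lemma dc (Om : {set 'I_k}) (Omg : {set 'I_l}) :
  \sum_(i in Omg) cnt Om i =
  #|[set j in Om | oapp (fun i => i \in Omg) false (sigma j)]|.
Proof.
rewrite card_cond /cnt exchange_big /=; apply: eq_bigr => j _.
case: (sigma j) => [i0|] /=; last by rewrite big1.
rewrite big_mkcond /= (bigD1 i0) //= eqxx big1.
  by case: (i0 \in Omg).
move=> i /negbTE ne.
have -> : (Some i0 == Some i) = (i0 == i) by apply/eqP/eqP => [[]|->].
by rewrite eq_sym ne; case: (i \in Omg).
Qed.

End Sigma.

Lemma count_nth_sum (X : eqType) (x0 x : X) (s : seq X) m :
  size s = m -> (\sum_(j < m) nat_of_bool (nth x0 s j == x) = count_mem x s)%N.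
Proof.
elim: s m => [|y s IH] m <- /=; first by rewrite big_ord0.
by rewrite big_ord_recl /= (IH (size s)) //.
Qed.

Lemma sumT (I : finType) (f : I -> nat) : (\sum_i f i = \sum_(i in [set: I]) f i)%N.
Proof. by apply: eq_bigl => i; rewrite inE. Qed.

Theorem mainTheorem16 (F : finFieldType) (n k d l : nat)
  (V : 'I_l -> {vspace 'rV[F]_n}) :
  (d <= k)%N -> (k <= n)%N ->
  (forall i, (\dim (V i) <= k)%N) ->
  [/\ (exists sigma : 'I_k -> option 'I_l,
         #|[set j | sigma j == None]| = d /\
         generic_kernel_pattern (pattern_of V sigma))
    <-> (exists delta : 'I_l -> nat,
         (\sum_i delta i)%N = (k - d)%N /\
         forall Om : {set 'I_l}, Om != set0 ->
           (\dim (\bigcap_(i in Om) V i)%VS <= k - \sum_(i in Om) delta i)%N),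
      (exists delta : 'I_l -> nat,
         (\sum_i delta i)%N = (k - d)%N /\
         forall Om : {set 'I_l}, Om != set0 ->
           (\dim (\bigcap_(i in Om) V i)%VS <= k - \sum_(i in Om) delta i)%N)
    <-> (forall P : {set {set 'I_l}}, partition P [set: 'I_l] ->
         (\sum_(B in P) \dim (\bigcap_(j in B) V j)%VS + k
            <= #|P| * k + d)%N)
    & (forall P : {set {set 'I_l}}, partition P [set: 'I_l] ->
         (\sum_(B in P) \dim (\bigcap_(j in B) V j)%VS + k
            <= #|P| * k + d)%N)
    <-> (exists sigma : 'I_k -> option 'I_l,
         #|[set j | sigma j == None]| = d /\
         generic_kernel_pattern (pattern_of V sigma)) ].
Proof.
move=> dk kn hV.
set S1 := exists sigma : 'I_k -> option 'I_l, _.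
set S2 := exists delta : 'I_l -> nat, _.
set S3 := forall P : {set {set 'I_l}}, _.
have H12 : S1 -> S2.
  case=> sigma [hd hgen].
  exists (cnt sigma [set: 'I_k]); split.
    rewrite sumT dc.
    have -> : [set j in [set: 'I_k] | oapp (fun i => i \in [set: 'I_l]) false (sigma j)]
            = ~: [set j | sigma j == None].
      by apply/setP => j; rewrite !inE; case: (sigma j) => [i|] /=; rewrite ?inE.
    have := cardsC [set j | sigma j == None]; rewrite card_ord hd; set c := #|~: _|; lia.
  move=> Omg nOmg.
  set Om := [set j in [set: 'I_k] | oapp (fun i => i \in Omg) false (sigma j)].
  rewrite dc -/Om.
  case: (boolP (Om == set0)) => [/eqP ->|nOm].
    by rewrite cards0 subn0; apply: (gV_k hV nOmg).
  apply: leq_trans (hgen Om nOm); apply: dimvS.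
  apply/subv_bigcapP => j; rewrite !inE /pattern_of.
  case e: (sigma j) => [i|] //= iO.
  exact: (bigcapv_inf i iO (subvv _)).
have H21 : S2 -> S1.
  case=> delta [hs hO].
  pose s := flatten [seq nseq (delta i) (Some i) | i <- enum 'I_l] ++ nseq d (@None 'I_l).
  have cntS : forall i, count_mem (Some i) s = delta i.
    move=> i; rewrite /s count_cat count_nseq /= mul0n addn0 count_flatten -map_comp.
    rewrite sumnE big_map big_enum /= (bigD1 i) //= count_nseq /= eqxx mul1n big1 ?addn0 //.
    move=> i' /negbTE ne; rewrite count_nseq /=.
    have -> : (Some i' == Some i) = (i' == i) by apply/eqP/eqP => [[]|->].
    by rewrite ne.
  have cntN : count_mem None s = d.
    rewrite /s count_cat count_nseq /= mul1n count_flatten -map_comp.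
    by rewrite sumnE big_map big1 // => i _; rewrite /= count_nseq.
  have sz : size s = k.
    rewrite /s size_cat size_nseq size_flatten /shape -map_comp sumnE big_map big_enum /=.
    rewrite (eq_bigr delta) => [|i _]; last by rewrite size_nseq.
    have -> : (\sum_(i in 'I_l) delta i = \sum_i delta i)%N by apply: eq_bigl.
    rewrite hs; lia.
  pose sigma := fun j : 'I_k => nth None s j.
  have cs : forall x, (\sum_(j : 'I_k) nat_of_bool (sigma j == x) = count_mem x s)%N.
    by move=> x; apply: count_nth_sum.
  have cT : forall i, cnt sigma [set: 'I_k] i = delta i.
    by move=> i; rewrite /cnt -sumT cs cntS.
  exists sigma; split.
    by rewrite -cntN -cs -sum1_card big_mkcond /=; apply: eq_bigr => j _; rewrite inE; case: (_ == _).
  move=> Om nOm.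
  case: (boolP [exists j in Om, sigma j == None]) => [/existsP[j /andP[jO /eqP e]]|noN].
    have z : (\bigcap_(i in Om) pattern_of V sigma i <= 0)%VS.
      by apply: (bigcapv_inf j jO); rewrite /pattern_of e subvv.
    by apply: leq_trans (dimvS z) _; rewrite dimv0.
  set Omg := [set i | [exists j in Om, sigma j == Some i]].
  have nOmg : Omg != set0.
    have [j jO] := set0Pn _ nOm.
    case e: (sigma j) => [i|].
      by apply/set0Pn; exists i; rewrite inE; apply/existsP; exists j; rewrite jO e ?eqxx.
    by move: noN; rewrite negb_exists => /forallP /(_ j); rewrite jO e ?eqxx.
  have h1 := hO Omg nOmg.
  have h2 : (\dim (\bigcap_(i in Om) pattern_of V sigma i) <= \dim (\bigcap_(i in Omg) V i))%N.
    apply: dimvS; apply/subv_bigcapP => i; rewrite inE => /existsP[j /andP[jO /eqP e]].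
    by apply: (bigcapv_inf j jO); rewrite /pattern_of e subvv.
  have h3 : #|Om| = \sum_(i in Omg) cnt sigma Om i.
    rewrite dc; apply: eq_card => j; rewrite !inE.
    case jO: (j \in Om) => //=.
    case e: (sigma j) => [i|] /=.
      by rewrite ?inE; apply/esym/existsP; exists j; rewrite jO e ?eqxx.
    by move: noN; rewrite negb_exists => /forallP /(_ j); rewrite jO e ?eqxx.
  have h4 : (\sum_(i in Omg) cnt sigma Om i <= \sum_(i in Omg) delta i)%N.
    apply: leq_sum => i _; rewrite -cT; exact: sum_subset (subsetT _).
  have h5 : (\sum_(i in Omg) delta i <= k)%N.
    apply: leq_trans (sum_subset _ (subsetT Omg)) _; rewrite -sumT hs; lia.
  move: h1 h2 h3 h4 h5.
  set a := \dim _; set b := \dim _; set c := (\sum_(i in Omg) delta i)%N.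
  set e := (\sum_(i in Omg) cnt _ _ _)%N; lia.
have H23 : S2 -> S3.
  case=> delta [hs hO] P /and3P[/eqP cP tP nP].
  have hB : forall B, B \in P -> (gV V B + \sum_(x in B) delta x <= k)%N.
    move=> B BP; have nB : B != set0 by apply: contraNneq nP => <-.
    have := hO B nB; have := sum_subset delta (subsetT B); rewrite -sumT hs.
    rewrite /gV => h1 h2; set t := (\sum_(i in B) delta i)%N in h1 h2 *.
    set a := \dim _ in h2 *; lia.
  have : (\sum_(B in P) (gV V B + \sum_(x in B) delta x) <= \sum_(B in P) k)%N.
    by apply: leq_sum.
  rewrite sum_nat_const big_split /=.
  have -> : (\sum_(i in P) \sum_(x in i) delta x = \sum_i delta i)%N.
    by rewrite -(big_trivIset _ tP) cP -sumT.
  rewrite hs; rewrite /gV; set G := (\sum_(i in P) _)%N; lia.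
have H32 : S3 -> S2.
  move=> h3.
  have [delta [fd sd]] := @augment l (gV V) k (@gV_sup _ _ _ V) (gV_k hV) d h3 (gV_k hV).
  exists delta; split => // Omg nO.
  move/feasP: fd => fd; have := fd _ nO; rewrite /gV => h.
  set t := (\sum_(i in Omg) delta i)%N in h *; set a := \dim _ in h *; lia.
split; split; auto.
Qed.
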